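(* Let $\Sigma$ be a system as in the context and let $O=\mathcal{O}bs_n(A,C)$. Then the relation $\ker([O\ \ -O])\subseteq\mathbb R^n\times\mathbb R^n$ is total, satisfies conditions $(h_0)$–$(h_4)$ below with $R_1=R_2=O$, and has maximal dimension among all total relations $\mathcal R=\ker([R_1\ \ -R_2])\subseteq\mathbb R^n\times\mathbb R^n$ ($R_1,R_2$ real matrices with $n$ columns and the same number of rows) satisfying: $(h_0)$ $\mathrm{diag}(A,A)\mathcal R\subseteq\mathcal R$; $(h_1)$ $R_1B=R_2B$; $(h_2)$ $R_1G\mu=R_2G\mu$; $(h_3)$ $R_1GG^TR_1^T=R_2GG^TR_2^T$; $(h_4)$ $\mathcal R\subseteq\ker([C\ \ -C])$.
   Context: $\Sigma$: $x(t+1)=Ax(t)+Bu(t)+Gw(t)$, $y(t)=Cx(t)+\nu(t)$, $t\in\mathbb N$, $x\in\mathbb R^n$, $u\in\mathbb R^m$, $w\in\mathbb R^l$, $y,\nu\in\mathbb R^p$, where $(w(t))_t$ is i.i.d. $\mathcal N(\mu,I_l)$ and $(\nu(t))_t$ is i.i.d. $\mathcal N(0,\Psi)$. $\mathcal{O}bs_n(A,C)$ is the matrix obtained by stacking $C,CA,\dots,CA^{n-1}$ vertically. A relation $\mathcal R\subseteq\mathbb R^n\times\mathbb R^n$ is total if every $x$ is a first component and every $x'$ a second component of some pair in $\mathcal R$. *)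

(* Defs.v *)
From HB Require Import structures.
From mathcomp Require Import all_boot all_order all_algebra.
From mathcomp Require Import reals.
Set Implicit Arguments. Unset Strict Implicit. Unset Printing Implicit Defensive.
Import Order.TTheory GRing.Theory Num.Theory.
Local Open Scope ring_scope.

Definition Obs {R : realType} (n p : nat) (A : 'M[R]_n) (C : 'M[R]_(p, n))
  : 'M[R]_(\sum_(i < n) p, n) := \mxcol_(i < n) (C *m A ^+ i).

(* The relation ker([R1 -R2]) as a predicate on 'cV_(n+n) (pairs (x,x')
   are represented by col_mx x x'). *)
Definition kerrel {R : realType} (k n : nat) (R1 R2 : 'M[R]_(k, n))
  (z : 'cV[R]_(n + n)) : Prop := row_mx R1 (- R2) *m z = 0.

Definition kerrel_dim {R : realType} (k n : nat) (R1 R2 : 'M[R]_(k, n)) : nat :=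
  \rank (kermx (row_mx R1 (- R2))^T).

Definition total_rel {R : realType} (n : nat) (P : 'cV[R]_(n + n) -> Prop) : Prop :=
  (forall x : 'cV[R]_n, exists x' : 'cV[R]_n, P (col_mx x x')) /\
  (forall x' : 'cV[R]_n, exists x : 'cV[R]_n, P (col_mx x x')).

Definition conds_h {R : realType} (n m l p k : nat)
  (A : 'M[R]_n) (B : 'M[R]_(n, m)) (G : 'M[R]_(n, l)) (C : 'M[R]_(p, n))
  (mu : 'cV[R]_l) (R1 R2 : 'M[R]_(k, n)) : Prop :=
  [/\ (forall z, kerrel R1 R2 z -> kerrel R1 R2 (block_mx A 0 0 A *m z)),
      R1 *m B = R2 *m B,
      R1 *m G *m mu = R2 *m G *m mu,
      R1 *m G *m G^T *m R1^T = R2 *m G *m G^T *m R2^T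
    & (forall z, kerrel R1 R2 z -> kerrel C C z)].

(* Main.v *)
Require Import Defs.
From HB Require Import structures.
From mathcomp Require Import all_boot all_order all_algebra.
From mathcomp Require Import reals.
Import Order.TTheory GRing.Theory Num.Theory.
Local Open Scope ring_scope.

Set Implicit Arguments. Unset Strict Implicit.
Section Aux.
Variable R : realType.

Lemma kerrelE k n (R1 R2 : 'M[R]_(k, n)) x x' :
  kerrel R1 R2 (col_mx x x') <-> R1 *m x = R2 *m x'.
Proof.
rewrite /kerrel mul_row_col mulNmx; split; first by move/eqP; rewrite subr_eq0 => /eqP.
by move=> ->; rewrite subrr.
Qed.

Lemma rank_kerrel k1 k2 N (M1 : 'M[R]_(k1, N)) (M2 : 'M[R]_(k2, N)) :
  (forall z : 'cV_N, M1 *m z = 0 -> M2 *m z = 0) ->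
  (\rank (kermx M1^T) <= \rank (kermx M2^T))%N.
Proof.
move=> H; apply: mxrankS; apply/sub_kermxP.
set K := kermx M1^T.
have H1 : M1 *m K^T = 0 by rewrite -[M1]trmxK -trmx_mul mulmx_ker trmx0.
rewrite -[LHS]trmxK trmx_mul trmxK.
suff -> : M2 *m K^T = 0 by rewrite trmx0.
apply/matrixP => i j.
have : col j (M2 *m K^T) = 0.
  rewrite colE -mulmxA -colE; apply: H.
  by rewrite colE mulmxA H1 mul0mx.
by move/matrixP/(_ i 0); rewrite !mxE.
Qed.

Lemma key n p (A : 'M[R]_n) (C : 'M[R]_(p, n)) (d : 'cV[R]_n) :
  (forall i : 'I_n, C *m A ^+ i *m d = 0) -> C *m A ^+ n *m d = 0.
Proof.
case: n A C d => [|n] A C d H; first by rewrite (flatmx0 d) mulmx0.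
have CH := Cayley_Hamilton A.
set q := char_poly A in CH.
have sq : size q = n.+2 by rewrite size_char_poly.
have lq : q`_n.+1 = 1.
  by have /monicP := char_poly_monic A; rewrite lead_coefE sq.
have E : horner_mx A q = \sum_(i < n.+2) q`_i *: A ^+ i.
  rewrite -{1}(coefK q) poly_def sq rmorph_sum; apply: eq_bigr => i _.
  by rewrite -mul_polyC rmorphM /= horner_mx_C rmorphXn /= horner_mx_X -scalemx1 -scalerAl mul1r.
rewrite E big_ord_recr /= lq scale1r in CH.
have -> : A ^+ n.+1 = - \sum_(i < n.+1) q`_i *: A ^+ i.
  by apply/eqP; rewrite -addr_eq0 addrC CH.
rewrite mulmxN mulNmx mulmx_sumr mulmx_suml big1 ?oppr0 // => i _.
by rewrite -scalemxAr -scalemxAl H scaler0.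
Qed.

Lemma allj n p (A : 'M[R]_n) (C : 'M[R]_(p, n)) (d : 'cV[R]_n) :
  (forall i : 'I_n, C *m A ^+ i *m d = 0) -> forall j, C *m A ^+ j *m d = 0.
Proof.
move=> H j; elim/ltn_ind: j => j IH.
case: (ltnP j n) => [lt|ge]; first exact: (H (Ordinal lt)).
rewrite -(subnK ge) addnC exprD -mulmxE !mulmxA -(mulmxA _ _ d).
apply: key => i; rewrite mulmxA -(mulmxA C) mulmxE -exprD.
apply: IH; rewrite addnC -{2}(subnK ge) ltn_add2l; exact: ltn_ord.
Qed.

Lemma ObsP n p (A : 'M[R]_n) (C : 'M[R]_(p, n)) (x x' : 'cV[R]_n) :
  Obs A C *m x = Obs A C *m x' <-> forall i : 'I_n, C *m A ^+ i *m x = C *m A ^+ i *m x'.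
Proof.
rewrite /Obs !mxcol_mul; split.
  by move/eq_mxcolP.
by move=> H; apply/eq_mxcolP.
Qed.

Lemma ObsP0 n p (A : 'M[R]_n) (C : 'M[R]_(p, n)) (x x' : 'cV[R]_n) :
  Obs A C *m x = Obs A C *m x' -> forall j, C *m A ^+ j *m x = C *m A ^+ j *m x'.
Proof.
move/ObsP => H j; apply/eqP; rewrite -subr_eq0 -mulmxBr.
apply/eqP; apply: allj => i; by rewrite mulmxBr H subrr.
Qed.

End Aux.

Theorem theorem7 (R : realType) (n m l p : nat)
  (A : 'M[R]_n) (B : 'M[R]_(n, m)) (G : 'M[R]_(n, l)) (C : 'M[R]_(p, n))
  (mu : 'cV[R]_l) :
  let O := Obs A C in
  [/\ total_rel (kerrel O O),
      conds_h A B G C mu O O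
    & forall (k : nat) (R1 R2 : 'M[R]_(k, n)),
        total_rel (kerrel R1 R2) -> conds_h A B G C mu R1 R2 ->
        (kerrel_dim R1 R2 <= kerrel_dim O O)%N].
Proof.
move=> O; split.
- by split=> x; exists x; apply/kerrelE.
- split => // z.
    rewrite -[z]vsubmxK mul_block_col !mul0mx addr0 add0r => /kerrelE H.
    apply/kerrelE/ObsP => i; have e : A ^+ i *m A = A ^+ i.+1 by rewrite exprSr mulmxE.
    rewrite !mulmxA -!(mulmxA C) e.
    rewrite !mulmxA; exact: (ObsP0 H i.+1).
  rewrite -[z]vsubmxK => /kerrelE H; apply/kerrelE.
  by have := ObsP0 H 0; rewrite expr0 !mulmx1.
- move=> k R1 R2 _ [h0 _ _ _ h4]; apply: rank_kerrel => z.
  rewrite -[z]vsubmxK => Hz; apply/(kerrelE O O).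
  have Hi : forall i, kerrel R1 R2 (col_mx (A ^+ i *m usubmx z) (A ^+ i *m dsubmx z)).
    elim=> [|i IH]; first by rewrite expr0 !mul1mx.
    have := h0 _ IH; rewrite mul_block_col !mul0mx addr0 add0r.
    have e : A *m A ^+ i = A ^+ i.+1 by rewrite exprS mulmxE.
    by rewrite !mulmxA e.
  apply/ObsP => i; rewrite -!mulmxA; apply/kerrelE; exact: h4.
Qed.
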